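(* Every $c_0$-octahedral real Banach space is universally octahedral. Moreover, a Banach space $X$ is $c_0$-octahedral if and only if for every finite dimensional subspace $Z\subseteq X$ and every $\varepsilon>0$ there exists a subspace $Y\subseteq X$ isometric to $c_0$ such that $\|z+y\|>(1-\varepsilon)(\|z\|+\|y\|)$ for all $y\in Y$ and $z\in Z$.
   Context: A Banach space $W$ is octahedral if for every finite dimensional subspace $E$ of $W$ and every $\varepsilon>0$ there exists $y\in W$, $\|y\|=1$, with $\|x+\lambda y\|\ge(1-\varepsilon)(\|x\|+|\lambda|)$ for all $x\in E$, $\lambda\in\mathbb R$. A real Banach space $X$ is universally octahedral if the space $L(Y,X)$ of bounded operators from $Y$ to $X$ with the operator norm is octahedral for every non-zero real Banach space $Y$. $X$ is $c_0$-octahedral if for every $x_1,\dots,x_n$ in the unit sphere of $X$ and every $\varepsilon>0$ there exists a subspace $Y\subseteq X$ isometric to $c_0$ such that $\|x_i+y\|>(1-\varepsilon)(1+\|y\|)$ for all $y\in Y$ and $1\le i\le n$. *)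

(* Defs.v *)
From HB Require Import structures.
From mathcomp Require Import all_boot all_order all_algebra.
From mathcomp Require Import all_classical all_reals all_analysis.
Set Implicit Arguments. Unset Strict Implicit. Unset Printing Implicit Defensive.
Import Order.TTheory GRing.Theory Num.Theory.
Import numFieldNormedType.Exports.
Local Open Scope classical_set_scope.
Local Open Scope ring_scope.

(* Linear span of a finite family of vectors: finite-dimensional subspaces
   are exactly the spans of finite sequences. *)
Definition span_of (R : realType) (V : lmodType R) (s : seq V) : set V :=
  [set x | exists c : 'I_(size s) -> R, x = \sum_(i < size s) c i *: s`_i].

(* Octahedrality of the normed space (W, N), W a linear subspace of the
   vector space V and N the norm on W. *)
Definition octahedral_on (R : realType) (V : lmodType R) (W : set V)
    (N : V -> R) : Prop :=
  forall s : seq V, (forall i : 'I_(size s), W s`_i) ->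
  forall eps : R, 0 < eps ->
  exists y : V, W y /\ N y = 1 /\
    forall (x : V) (lam : R), span_of s x ->
      (1 - eps) * (N x + `|lam|) <= N (x + lam *: y).

Definition bounded_linear (R : realType) (Y X : normedModType R)
    (T : Y -> X) : Prop :=
  (forall (a : R) (u v : Y), T (a *: u + v) = a *: T u + T v) /\
  exists M : R, forall y : Y, `|T y| <= M * `|y|.

Definition opnorm (R : realType) (Y X : normedModType R) (T : Y -> X) : R :=
  sup [set `|T y| | y in [set y : Y | `|y| <= 1]].

Definition universally_octahedral (R : realType)
    (X : completeNormedModType R) : Prop :=
  forall Y : completeNormedModType R, (exists y : Y, y != 0) ->
    octahedral_on (V := (Y -> X)) (@bounded_linear R Y X) (@opnorm R Y X).

Definition c0seq (R : realType) (u : nat -> R) : Prop := u @ \oo --> (0 : R).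

Definition c0norm (R : realType) (u : nat -> R) : R :=
  sup [set `|u n| | n in [set: nat]].

Definition c0_isometry (R : realType) (X : normedModType R)
    (J : (nat -> R) -> X) : Prop :=
  (forall (a : R) (u v : nat -> R), c0seq u -> c0seq v ->
     J (fun n => a * u n + v n) = a *: J u + J v) /\
  (forall u, c0seq u -> `|J u| = c0norm u).

Definition c0_subspace (R : realType) (X : normedModType R) (Y : set X) : Prop :=
  exists J : (nat -> R) -> X, c0_isometry J /\ Y = J @` (@c0seq R).

Definition c0_octahedral (R : realType) (X : normedModType R) : Prop :=
  forall xs : seq X, (forall i : 'I_(size xs), `|xs`_i| = 1) ->
  forall eps : R, 0 < eps ->
  exists Y : set X, c0_subspace Y /\
    forall y, Y y -> forall i : 'I_(size xs),
      (1 - eps) * (1 + `|y|) < `|xs`_i + y|.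

(* The finite-dimensional-subspace characterization; the trivial pair
   z = y = 0 is excluded (otherwise the strict inequality 0 > 0 fails). *)
Definition c0_fd_condition (R : realType) (X : normedModType R) : Prop :=
  forall zs : seq X, forall eps : R, 0 < eps ->
  exists Y : set X, c0_subspace Y /\
    forall y z, Y y -> span_of zs z -> (z != 0 \/ y != 0) ->
      (1 - eps) * (`|z| + `|y|) < `|z + y|.

(* Main.v *)
Require Import Defs.
From HB Require Import structures.
From mathcomp Require Import all_boot all_order all_algebra.
From mathcomp Require Import all_classical all_reals all_analysis.
From mathcomp Require Import ring lra.
Import Order.TTheory GRing.Theory Num.Theory Num.Def.
Import archimedean.Num.Theory archimedean.Num.Def.
Import numFieldNormedType.Exports.
Local Open Scope classical_set_scope.
Local Open Scope ring_scope.
Set Implicit Arguments. Unset Strict Implicit. Unset Printing Implicit Defensive.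

Lemma grid1 (R : realType) (r eta : R) : 0 < eta ->
  exists G : seq R, forall a, `|a| <= r -> exists2 g, g \in G & `|a - g| < eta.
Proof.
move=> e0.
exists [seq - r + i%:R * eta | i <- iota 0 (truncn (2 * r / eta)).+1].
move=> a har.
have r0 : 0 <= r by apply: le_trans har.
have [al ar] : -r <= a /\ a <= r by move: har; rewrite ler_norml => /andP[].
have q0 : 0 <= (a + r) / eta by apply: divr_ge0 => //; [lra | exact: ltW].
have /andP[h1 h2] := truncn_itv q0.
set k := truncn ((a + r) / eta) in h1 h2.
exists (- r + k%:R * eta).
  apply/mapP; exists k => //; rewrite mem_iota /= add0n ltnS.
  apply: le_truncn; apply: ler_wpM2r; [rewrite invr_ge0; exact: ltW | lra].
have : k%:R * eta <= a + r by rewrite -ler_pdivlMr.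
have : a + r < k.+1%:R * eta by rewrite -ltr_pdivrMr.
rewrite -natr1 mulrDl mul1r => H1 H2.
rewrite ger0_norm; lra.
Qed.
Lemma incr_ge (f : nat -> nat) : increasing_seq f -> forall k, (k <= f k)%N.
Proof.
move=> hf; elim=> [//|k IH].
have : (f k < f k.+1)%N.
  rewrite ltnNge; apply/negP => h.
  by have := hf k.+1 k; rewrite leEnat h ltnn.
exact: leq_ltn_trans.
Qed.

Lemma bw_elem (R : realType) (a : nat -> R) (r : R) : (forall k, `|a k| <= r) ->
  exists phi : nat -> nat, exists l : R, (forall k, (k <= phi k)%N) /\ `|l| <= r /\
    forall e, 0 < e -> exists K, forall k, (K <= k)%N -> `|a (phi k) - l| < e.
Proof.
move=> ar.
have bnd : bounded_fun a.
  exists r; split; first by rewrite num_real.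
  move=> x rx k _; apply: le_trans (ar k) _; exact: ltW.
have [f finc fcv] := bolzano_weierstrass bnd.
move/cvg_ex : fcv => [l fl].
have conv : forall e, 0 < e -> exists K, forall k, (K <= k)%N -> `|a (f k) - l| < e.
  move=> e e0; move/cvgrPdistC_lt : fl => /(_ e e0) [K _ HK].
  by exists K => k Kk; apply: HK.
exists f, l; split; first exact: incr_ge.
split => //.
rewrite leNgt; apply/negP => lr.
have e0 : 0 < `|l| - r by lra.
have [K HK] := conv _ e0.
have := HK K (leqnn K); have := ar (f K).
move=> h2 h3.
have : `|l| - `|a (f K)| <= `|a (f K) - l|.
  rewrite distrC; apply: le_trans (ler_dist_dist _ _); exact: ler_norm.
lra.
Qed.
Section Net.
Variables (R : realType) (V : lmodType R) (W : set V) (N : V -> R).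
Hypotheses (W0 : W 0) (WD : forall x y, W x -> W y -> W (x + y))
  (WZ : forall (a : R) x, W x -> W (a *: x))
  (NZ : forall (a : R) x, W x -> N (a *: x) = `|a| * N x)
  (ND : forall x y, W x -> W y -> N (x + y) <= N x + N y).

Lemma WN x : W x -> W (- x).
Proof. by move=> Wx; rewrite -scaleN1r; apply: WZ. Qed.

Lemma WB x y : W x -> W y -> W (x - y).
Proof. by move=> Wx Wy; apply: WD => //; apply: WN. Qed.

Lemma N0 : N 0 = 0.
Proof. by rewrite -(scale0r 0) NZ // normr0 mul0r. Qed.

Lemma NN x : W x -> N (- x) = N x.
Proof. by move=> Wx; rewrite -scaleN1r NZ // normrN normr1 mul1r. Qed.

Lemma N_ge0 x : W x -> 0 <= N x.
Proof.
move=> Wx; have := ND Wx (WN Wx); rewrite subrr N0 NN //.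
move=> h; have : 0 <= N x * 2 by rewrite mulr2n; lra.
by rewrite pmulr_lge0.
Qed.

Lemma NB3 x y z : W x -> W y -> W z -> N (x - z) <= N (x - y) + N (y - z).
Proof.
move=> Wx Wy Wz; have -> : x - z = (x - y) + (y - z) by rewrite addrA subrK.
by apply: ND; apply: WB.
Qed.

Lemma Nrev x y : W x -> W y -> N x - N y <= N (x - y).
Proof.
move=> Wx Wy; have := ND (WB Wx Wy) Wy; rewrite subrK; lra.
Qed.

Lemma NBC x y : W x -> W y -> N (x - y) = N (y - x).
Proof. by move=> Wx Wy; rewrite -NN ?opprB //; apply: WB. Qed.

Fixpoint allW (s : seq V) : Prop :=
  if s is x :: s' then W x /\ allW s' else True.

Fixpoint rspan (s : seq V) (z : V) : Prop :=
  if s is x :: s' then exists a w, rspan s' w /\ z = a *: x + w else z = 0.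

Fixpoint rbox (s : seq V) (r : R) (z : V) : Prop :=
  if s is x :: s' then exists a w, `|a| <= r /\ rbox s' r w /\ z = a *: x + w
  else z = 0.

Lemma rspan_W s z : allW s -> rspan s z -> W z.
Proof.
elim: s z => [|x s IH] z /=; first by move=> _ ->.
by move=> [Wx Ws] [a [w [sw ->]]]; apply: WD; [apply: WZ | apply: IH].
Qed.

Lemma rbox_span s r z : rbox s r z -> rspan s z.
Proof.
elim: s z => [|x s IH] z //= [a [w [_ [bw ->]]]].
by exists a, w; split => //; apply: IH.
Qed.

Lemma rbox_mono s r r' z : r <= r' -> rbox s r z -> rbox s r' z.
Proof.
move=> rr; elim: s z => [|x s IH] z //= [a [w [ar [bw ->]]]].
by exists a, w; split; [exact: le_trans rr | split => //; apply: IH].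
Qed.

Lemma rspan0 s : rspan s 0.
Proof. by elim: s => [|x s IH] //=; exists 0, 0; rewrite scale0r addr0. Qed.

Lemma rspanZ s (c : R) z : rspan s z -> rspan s (c *: z).
Proof.
elim: s z => [|x s IH] z /=; first by move=> ->; rewrite scaler0.
move=> [a [w [sw ->]]]; exists (c * a), (c *: w); split; first exact: IH.
by rewrite scalerDr scalerA.
Qed.

Lemma rspanD s z z' : rspan s z -> rspan s z' -> rspan s (z + z').
Proof.
elim: s z z' => [|x s IH] z z' /=; first by move=> -> ->; rewrite addr0.
move=> [a [w [sw ->]]] [a' [w' [sw' ->]]]; exists (a + a'), (w + w').
split; first exact: IH.
by rewrite scalerDl -!addrA; congr (_ + _); rewrite addrCA.
Qed.

Lemma rspanB s z z' : rspan s z -> rspan s z' -> rspan s (z - z').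
Proof. by move=> h h'; apply: rspanD => //; rewrite -scaleN1r; apply: rspanZ. Qed.

Lemma grid s : allW s -> forall r d : R, 0 < d ->
  exists L : seq V, (forall p, p \in L -> rspan s p) /\
    forall z, rbox s r z -> exists2 p, p \in L & N (z - p) < d.
Proof.
elim: s => [|x s IH] /=.
  move=> _ r d d0; exists [:: 0]; split; first by move=> p; rewrite inE => /eqP ->.
  by move=> z ->; exists 0; rewrite ?inE // subrr N0.
move=> [Wx Ws] r d d0.
have d20 : 0 < d / 2 by lra.
have [L' [L'sp L'net]] := IH Ws r _ d20.
have Nx0 := N_ge0 Wx.
have e0 : 0 < d / 2 / (N x + 1) by apply: divr_gt0 => //; lra.
have [G HG] := grid1 r e0.
exists [seq g *: x + p | g <- G, p <- L']; split.
  move=> q /allpairsP [[g p] [_ /= pL ->]].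
  by exists g, p; split => //; apply: L'sp.
move=> z [a [w [ar [bw ->]]]].
have [g gG ag] := HG a ar.
have [p pL wp] := L'net w bw.
exists (g *: x + p); first by apply: allpairs_f.
have -> : a *: x + w - (g *: x + p) = (a - g) *: x + (w - p).
  by rewrite scalerBl opprD addrACA.
have Ww : W w by apply: (rspan_W Ws); apply: rbox_span bw.
have Wp : W p by apply: (rspan_W Ws); apply: L'sp.
apply: le_lt_trans (ND (WZ _ Wx) (WB Ww Wp)) _.
rewrite NZ //.
have : `|a - g| * N x <= d / 2.
  apply: le_trans (_ : `|a - g| * (N x + 1) <= d/2).
    by apply: ler_wpM2l => //; lra.
  by rewrite -ler_pdivlMr; [exact: ltW | lra].
lra.
Qed.

Lemma SC s : allW s -> forall r (u : nat -> V), (forall k, rbox s r (u k)) ->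
  exists phi : nat -> nat, exists v, (forall k, (k <= phi k)%N) /\ rbox s r v /\
    forall e, 0 < e -> exists K, forall k, (K <= k)%N -> N (u (phi k) - v) < e.
Proof.
elim: s => [|x s IH] /=.
  move=> _ r u hu; exists id, 0; split => //; split => // e e0.
  by exists 0%N => k _; rewrite hu subrr N0.
move=> [Wx Ws] r u hu.
have : forall k, exists p : R * V, `|p.1| <= r /\ rbox s r p.2 /\ u k = p.1 *: x + p.2.
  by move=> k; have [a [w [h1 [h2 h3]]]] := hu k; exists (a, w).
move=> /choice [g Hg].
have [phi1 [l [phi1ge [lr conv1]]]] := bw_elem (fun k => (Hg k).1).
have [phi2 [v [phi2ge [bv conv2]]]] := IH Ws r (fun k => (g (phi1 k)).2)
  (fun k => (Hg (phi1 k)).2.1).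
exists (phi1 \o phi2), (l *: x + v); split.
  by move=> k /=; apply: leq_trans (phi2ge k) (phi1ge _).
split; first by exists l, v.
move=> e e0.
have Nx0 := N_ge0 Wx.
have e1 : 0 < e / 2 / (N x + 1) by apply: divr_gt0 => //; lra.
have e2 : 0 < e / 2 by lra.
have [K1 HK1] := conv1 _ e1.
have [K2 HK2] := conv2 _ e2.
exists (maxn K1 K2) => k Kk /=.
have [_ [_ ->]] := Hg (phi1 (phi2 k)).
set a := (g (phi1 (phi2 k))).1; set w := (g (phi1 (phi2 k))).2.
have -> : a *: x + w - (l *: x + v) = (a - l) *: x + (w - v).
  by rewrite scalerBl opprD addrACA.
have Ww : W w by apply: (rspan_W Ws); apply: rbox_span; exact: (Hg _).2.1.
have Wv : W v by apply: (rspan_W Ws); apply: rbox_span bv.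
apply: le_lt_trans (ND (WZ _ Wx) (WB Ww Wv)) _.
rewrite NZ //.
have h1 : `|a - l| < e / 2 / (N x + 1).
  apply: HK1; apply: leq_trans (phi2ge k); apply: leq_trans Kk; exact: leq_maxl.
have h2 : N (w - v) < e / 2.
  apply: HK2; apply: leq_trans Kk; exact: leq_maxr.
have : `|a - l| * N x <= e / 2.
  apply: le_trans (_ : `|a - l| * (N x + 1) <= e/2).
    by apply: ler_wpM2l => //; lra.
  by rewrite -ler_pdivlMr; [exact: ltW | lra].
lra.
Qed.

Lemma Nsym0 z v : W z -> W v -> N (z - v) = 0 -> N v = N z.
Proof.
move=> Wz Wv h; apply/eqP; rewrite eq_le; apply/andP; split.
  have := Nrev Wv Wz; rewrite NBC // h; lra.
have := Nrev Wz Wv; rewrite h; lra.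
Qed.

Lemma Bnd s : allW s -> exists M, 0 <= M /\ forall z, rspan s z ->
  exists z', rbox s (M * N z) z' /\ N (z - z') = 0.
Proof.
elim: s => [|x s IH] /=.
  by move=> _; exists 0; split => // z ->; exists 0; split => //; rewrite subrr N0.
move=> [Wx Ws]; have [M [M0 HM]] := IH Ws.
have spW := rspan_W Ws.
have [[ws [sws xws]]|nA] := pselect (exists w, rspan s w /\ N (x - w) = 0).
  exists M; split => // z [a [w [sw ->]]].
  have Wz : W (a *: x + w) by apply: WD; [apply: WZ | apply: spW].
  set v := a *: ws + w.
  have sv : rspan s v by apply: rspanD => //; apply: rspanZ.
  have Wv := spW _ sv.
  have zv : N (a *: x + w - v) = 0.
    rewrite /v opprD addrACA subrr addr0 -scalerBr NZ ?xws ?mulr0 //.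
    by apply: WB => //; apply: spW.
  have Nvz := Nsym0 Wz Wv zv.
  have [v' [bv' vv']] := HM _ sv.
  have Wv' : W v' by apply: spW; apply: rbox_span bv'.
  exists (0 *: x + v'); split.
    exists 0, v'; split; last by rewrite -Nvz.
    by rewrite normr0; apply: mulr_ge0 => //; apply: N_ge0.
  rewrite scale0r add0r; apply/eqP; rewrite eq_le N_ge0 ?andbT; last exact: WB.
  by have := NB3 Wz Wv Wv'; rewrite zv vv'; lra.
have [d [d0 hd]] : exists d, 0 < d /\ forall w, rspan s w -> d <= N (x - w).
  apply: contrapT => hd.
  have hk : forall k : nat, exists w, rspan s w /\ N (x - w) < (k.+1%:R)^-1.
    move=> k; apply: contrapT => hn; apply: hd; exists (k.+1%:R^-1); split.
      by rewrite invr_gt0 ltr0n.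
    move=> w sw; rewrite leNgt; apply/negP => lt; apply: hn; by exists w.
  move/choice : hk => [wk Hwk].
  have : forall k, exists w', rbox s (M * N (wk k)) w' /\ N (wk k - w') = 0.
    by move=> k; apply: HM; exact: (Hwk k).1.
  move/choice => [wk' Hwk'].
  have Wwk k : W (wk k) by apply: spW; exact: (Hwk k).1.
  have Wwk' k : W (wk' k) by apply: spW; apply: rbox_span; exact: (Hwk' k).1.
  have Nx0 := N_ge0 Wx.
  have bx : forall k, rbox s (M * (N x + 1)) (wk' k).
    move=> k; apply: rbox_mono (Hwk' k).1; apply: ler_wpM2l => //.
    have := Nrev (Wwk k) Wx; rewrite (NBC (Wwk k) Wx).
    have : (k.+1%:R : R)^-1 <= 1 by rewrite invf_le1 ?ler1n ?ltr0n.
    have := (Hwk k).2; move=> h1 h2 h3; have := lt_le_trans h1 h2; lra.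
  have [phi [v [phige [bv conv]]]] := SC Ws bx.
  have sv := rbox_span bv; have Wv := spW _ sv.
  apply: nA; exists v; split => //.
  apply/eqP; rewrite eq_le N_ge0 ?andbT; last exact: WB.
  rewrite leNgt; apply/negP => t0.
  set t := N (x - v) in t0.
  have [K HK] := conv (t / 2) ltac:(lra).
  set k := maxn K (truncn (2 / t)).
  have h1 := HK k (leq_maxl _ _).
  have h2 := (Hwk (phi k)).2.
  have h3 := (Hwk' (phi k)).2.
  have h4 : ((phi k).+1%:R : R)^-1 < t / 2.
    rewrite -[t / 2]invf_div ltf_pV2 ?posrE ?ltr0n //; last by apply: divr_gt0.
    apply: lt_le_trans (truncnS_gt (2 / t)) _.
    rewrite ler_nat ltnS; apply: leq_trans (phige k); exact: leq_maxr.
  have := NB3 Wx (Wwk (phi k)) Wv.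
  have := NB3 (Wwk (phi k)) (Wwk' (phi k)) Wv.
  have h5 := lt_trans h2 h4; rewrite -/t; lra.
have Nx0 := N_ge0 Wx.
pose M' := d^-1 + M * (1 + N x / d).
have dinv0 : 0 <= d^-1 by rewrite invr_ge0; exact: ltW.
have M'0 : 0 <= M' by apply: addr_ge0 => //; apply: mulr_ge0 => //;
  apply: addr_ge0 => //; apply: divr_ge0 => //; exact: ltW.
exists M'; split => // z0 [a [w [sw ->]]].
have Ww := spW _ sw.
have Wz : W (a *: x + w) by apply: WD; [apply: WZ | apply: spW].
have Nz0 := N_ge0 Wz.
set z := a *: x + w in Wz Nz0 *.
have hadz : `|a| * d <= N z.
  have [->|a0] := eqVneq a 0; first by rewrite normr0 mul0r.
  have -> : z = a *: (x - (- a^-1) *: w).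
    by rewrite /z scalerDr scalerN scalerA mulrN mulfV // scaleNr opprK scale1r.
  rewrite NZ; last by apply: WB => //; apply: WZ.
  apply: ler_wpM2l => //; apply: hd; exact: rspanZ.
have ha : `|a| <= N z / d by rewrite ler_pdivlMr.
have hw : N w <= N z * (1 + N x / d).
  have -> : w = z - a *: x by rewrite /z addrC addKr.
  apply: le_trans (ND Wz (WN (WZ a Wx))) _.
  rewrite NN ?NZ //; last exact: WZ.
  have : `|a| * N x <= N z / d * N x by apply: ler_wpM2r.
  rewrite mulrDr mulr1 mulrA; lra.
have [w' [bw' ww']] := HM _ sw.
exists (a *: x + w'); split.
  exists a, w'; split.
    rewrite /M' mulrDl; apply: le_trans ha _; rewrite mulrC lerDl.
    by apply: mulr_ge0 => //; apply: mulr_ge0 => //; apply: addr_ge0 => //;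
      apply: divr_ge0 => //; exact: ltW.
  split => //; apply: rbox_mono bw'.
  rewrite /M' mulrDl -mulrA [(1 + _) * _]mulrC.
  apply: le_trans (_ : M * (N z * (1 + N x / d)) <= _); first exact: ler_wpM2l.
  by rewrite lerDr; apply: mulr_ge0.
by rewrite /z opprD addrACA subrr add0r.
Qed.

Lemma net s : allW s -> forall d, 0 < d -> exists us : seq V,
  (forall u, u \in us -> rspan s u /\ N u = 1) /\
  forall z, rspan s z -> N z = 1 -> exists2 u, u \in us & N (z - u) < d.
Proof.
move=> Ws d d0.
have spW := rspan_W Ws.
have [M [M0 HM]] := Bnd Ws.
pose d' := Num.min d 1 / 2.
have d'0 : 0 < d' by rewrite /d' divr_gt0 // lt_min d0 ltr01.
have d'1 : d' <= 1 / 2 by rewrite /d' ler_pM2r // ge_min lexx orbT.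
have d'd : 2 * d' <= d by rewrite /d' mulrC divfK // ge_min lexx.
have [L [Lsp Lnet]] := grid Ws M d'0.
exists [seq (N p)^-1 *: p | p <- L & N p != 0]; split.
  move=> u /mapP [p]; rewrite mem_filter => /andP [Np0 pL] ->.
  split; first by apply: rspanZ; apply: Lsp.
  rewrite NZ; last by apply: spW; apply: Lsp.
  rewrite ger0_norm ?mulVf // invr_ge0; apply: N_ge0; apply: spW; exact: Lsp.
move=> z sz Nz1.
have [z' [bz' zz']] := HM _ sz; rewrite Nz1 mulr1 in bz'.
have [p pL z'p] := Lnet _ bz'.
have Wz := spW _ sz; have Wz' := spW _ (rbox_span bz'); have Wp := spW _ (Lsp _ pL).
have zp : N (z - p) < d'.
  by have := NB3 Wz Wz' Wp; rewrite zz'; lra.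
have Np : 1 - N (z - p) <= N p.
  by have := Nrev Wz Wp; rewrite Nz1; lra.
have Np0 : 0 < N p by lra.
exists ((N p)^-1 *: p).
  apply/mapP; exists p => //; rewrite mem_filter pL andbT; exact: lt0r_neq0.
have Wu : W ((N p)^-1 *: p) by apply: WZ.
apply: le_lt_trans (NB3 Wz Wp Wu) _.
have -> : p - (N p)^-1 *: p = (1 - (N p)^-1) *: p by rewrite scalerBl scale1r.
have e : `|1 - (N p)^-1| * N p = `|N p - 1|.
  by rewrite -{2}(gtr0_norm Np0) -normrM mulrBl mul1r mulVf // lt0r_neq0.
rewrite NZ // e.
have : `|N p - 1| <= N (z - p).
  rewrite ler_norml; apply/andP; split.
    by have := Nrev Wz Wp; rewrite Nz1; lra.
  by have := Nrev Wp Wz; rewrite Nz1 (NBC Wp Wz); lra.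
lra.
Qed.
End Net.

Lemma span_rspan (R : realType) (V : lmodType R) (s : seq V) z :
  span_of s z <-> rspan s z.
Proof.
elim: s z => [|x s IH] z /=.
  split; first by move=> [c ->]; rewrite big_ord0.
  by move=> ->; exists (fun _ => 0); rewrite big_ord0.
split.
  move=> [c ->]; rewrite big_ord_recl /=.
  exists (c ord0), (\sum_(i < size s) c (lift ord0 i) *: s`_i); split => //.
  by apply/IH; exists (fun i => c (lift ord0 i)).
move=> [a [w [sw ->]]]; have [c ->] := (IH w).2 sw.
exists (fun i : 'I_(size s).+1 => if unlift ord0 i is Some j then c j else a).
rewrite big_ord_recl /= unlift_none; congr (_ + _).
by apply: eq_bigr => i _; rewrite liftK.
Qed.

Lemma mem_span (R : realType) (V : lmodType R) (s : seq V) (i : 'I_(size s)) :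
  span_of s s`_i.
Proof.
exists (fun j => (j == i)%:R).
rewrite (bigD1 i) //= eqxx scale1r big1 ?addr0 // => j /negbTE ->.
by rewrite scale0r.
Qed.

Section C0.
Variables (R : realType) (X : normedModType R) (J : (nat -> R) -> X).
Hypothesis HJ : c0_isometry J.

Lemma c0seq_lin (a : R) u v : c0seq u -> c0seq v -> c0seq (fun n => a * u n + v n).
Proof.
move=> hu hv; rewrite /c0seq.
have -> : (0 : R) = a * 0 + 0 by rewrite mulr0 addr0.
by apply: cvgD => //; apply: cvgM => //; apply: cvg_cst.
Qed.

Lemma c0seq0 : c0seq (fun _ : nat => (0 : R)).
Proof. exact: cvg_cst. Qed.

Lemma J0 : J (fun _ => 0) = 0.
Proof.
have := HJ.1 1 _ _ c0seq0 c0seq0.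
have -> : (fun n : nat => 1 * (0 : R) + 0) = (fun _ => 0).
  by apply: funext => n; rewrite mulr0 addr0.
rewrite scale1r => h; apply: (addrI (J (fun _ => 0))).
by rewrite addr0 -h.
Qed.

Lemma JZ (a : R) u : c0seq u -> J (fun n => a * u n) = a *: J u.
Proof.
move=> hu; have := HJ.1 a _ _ hu c0seq0; rewrite J0 addr0.
have -> // : (fun n : nat => a * u n + 0) = (fun n => a * u n).
by apply: funext => n; rewrite addr0.
Qed.

Lemma imZ (a : R) y : (J @` (@c0seq R)) y -> (J @` (@c0seq R)) (a *: y).
Proof.
move=> [u hu <-]; exists (fun n => a * u n); last exact: JZ.
have := c0seq_lin a hu c0seq0.
have -> // : (fun n : nat => a * u n + 0) = (fun n => a * u n).
by apply: funext => n; rewrite addr0.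
Qed.
End C0.

Definition fsupp (R : realType) (m : nat) (f : nat -> R) : nat -> R :=
  fun n => if (n < m)%N then f n else 0.

Lemma c0seq_fsupp (R : realType) m (f : nat -> R) : c0seq (fsupp m f).
Proof.
apply/cvgrPdistC_lt => e e0; exists m => // n /= mn.
by rewrite /fsupp ltnNge mn /= subrr normr0.
Qed.

Lemma c0norm_fsupp_le (R : realType) m (f : nat -> R) c : 0 <= c ->
  (forall n, (n < m)%N -> `|f n| <= c) -> c0norm (fsupp m f) <= c.
Proof.
move=> c0 hf; apply: ge_sup; first by exists `|fsupp m f 0|, 0%N.
move=> _ [n _ <-]; rewrite /fsupp; case: ifP => nm; first exact: hf.
by rewrite normr0.
Qed.

Lemma c0norm_fsupp_ge (R : realType) m (f : nat -> R) c n : 0 <= c ->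
  (forall n, (n < m)%N -> `|f n| <= c) -> (n < m)%N ->
  `|f n| <= c0norm (fsupp m f).
Proof.
move=> c0 hf nm; apply: sup_upper_bound.
  split; first by exists `|fsupp m f 0|, 0%N.
  exists c => _ [k _ <-]; rewrite /fsupp; case: ifP => km; first exact: hf.
  by rewrite normr0.
by exists n => //; rewrite /fsupp nm.
Qed.

Section HahnBanach.
Variables (R : realType) (Y : normedModType R) (y0 : Y).

Definition PG (G : set (Y * R)) : Prop :=
  [/\ (forall y a b, G (y, a) -> G (y, b) -> a = b),
      (forall y a, G (y, a) -> a <= `|y|),
      (forall (c : R) y a z b, G (y, a) -> G (z, b) -> G (c *: y + z, c * a + b)) &
      (G = set0 \/ G (y0, `|y0|))].

Lemma PG_chain (F : set (set (Y * R))) : F `<=` PG -> total_on F subset ->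
  PG (\bigcup_(G in F) G).
Proof.
move=> FP tot; split.
- move=> y a b [G1 F1 h1] [G2 F2 h2].
  have [s12|s21] := tot _ _ F1 F2.
    by have [f _ _ _] := FP _ F2; apply: (f y); [apply: s12|].
  by have [f _ _ _] := FP _ F1; apply: (f y); [|apply: s21].
- by move=> y a [G1 F1 h1]; have [_ d _ _] := FP _ F1; apply: d.
- move=> c y a z b [G1 F1 h1] [G2 F2 h2].
  have [s12|s21] := tot _ _ F1 F2.
    by have [_ _ l _] := FP _ F2; exists G2 => //; apply: l => //; apply: s12.
  by have [_ _ l _] := FP _ F1; exists G1 => //; apply: l => //; apply: s21.
- have [[G FG Gy]|nG] := pselect (exists2 G, F G & G (y0, `|y0|)).
    by right; exists G.
  left; apply/seteqP; split => // p [G FG Gp].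
  have [_ _ _ [G0|Gy]] := FP _ FG; first by rewrite G0 in Gp.
  by exfalso; apply: nG; exists G.
Qed.

Lemma hahn_banach : exists g : Y -> R,
  (forall (a : R) u v, g (a *: u + v) = a * g u + g v) /\
  (forall y, `|g y| <= `|y|) /\ g y0 = `|y0|.
Proof.
have [A [[Af Ad Al Ay] Amax]] := Zorn_bigcup PG_chain.
pose B0 := [set p : Y * R | exists t : R, p = (t *: y0, t * `|y0|)].
have PB0 : PG B0.
  split.
  - move=> y a b [t [-> ->]] [t' [e ->]].
    have [->|y00] := eqVneq y0 0; first by rewrite normr0 !mulr0.
    move/eqP: e; rewrite -subr_eq0 -scalerBl scaler_eq0 (negbTE y00) orbF subr_eq0.
    by move/eqP ->.
  - by move=> y a [t [-> ->]]; rewrite normrZ ler_wpM2r // ler_norm.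
  - move=> c y a z b [t [-> ->]] [t' [-> ->]]; exists (c * t + t').
    by rewrite scalerDl scalerA mulrDl mulrA.
  - by right; exists 1; rewrite scale1r mul1r.
have Ay0 : A (y0, `|y0|).
  case: Ay => // A0; exfalso; apply: (Amax B0) => //; rewrite A0; split => //.
  move=> /(_ (y0, `|y0|)) h; have : (set0 : set (Y * R)) (y0, `|y0|).
    by apply: h; exists 1; rewrite scale1r mul1r.
  by [].
have A00 : A (0, 0).
  have := Al (-1) _ _ _ _ Ay0 Ay0.
  by rewrite scaleN1r mulN1r !addNr.
have AZ c y a : A (y, a) -> A (c *: y, c * a).
  by move=> h; have := Al c _ _ _ _ h A00; rewrite !addr0.
have AD y a z b : A (y, a) -> A (z, b) -> A (y + z, a + b).
  by move=> h h'; have := Al 1 _ _ _ _ h h'; rewrite scale1r mul1r.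
have tot : forall x, exists a, A (x, a).
  move=> x; apply: contrapT => nx.
  pose S := [set r | exists w a, A (w, a) /\ r = a - `|w - x|].
  have S0 : S !=set0 by exists (`|y0| - `|y0 - x|), y0, `|y0|.
  have Sub w2 a2 : A (w2, a2) -> ubound S (`|w2 + x| - a2).
    move=> h r [w1 [a1 [h1 ->]]].
    have := Ad _ _ (AD _ _ _ _ h1 h).
    have : `|w1 + w2| <= `|w1 - x| + `|w2 + x|.
      have -> : w1 + w2 = (w1 - x) + (w2 + x) by rewrite addrACA addNr addr0.
      exact: ler_normD.
    lra.
  have hS : has_sup S by split => //; exists (`|y0 + x| - `|y0|); apply: Sub.
  set c := sup S.
  have cle w a : A (w, a) -> c <= `|w + x| - a.
    by move=> h; apply: ge_sup => //; apply: Sub.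
  have cge w a : A (w, a) -> a - `|w - x| <= c.
    by move=> h; apply: sup_upper_bound => //; exists w, a.
  pose B := [set p : Y * R | exists w a t, A (w, a) /\ p = (w + t *: x, a + t * c)].
  have AB : A `<=` B.
    by move=> [w a] h; exists w, a, 0; rewrite scale0r mul0r !addr0.
  apply: (Amax B); first split => //.
    move=> BA; have h : A (0 + 1 *: x, 0 + 1 * c).
      by apply: BA; exists 0, 0, 1.
    by move: h; rewrite add0r scale1r => h; apply: nx; exists (0 + 1 * c).
  split.
  - move=> y a b [w [a1 [t [h1 [-> ->]]]]] [w' [a2 [t' [h2 [e ->]]]]].
    have [tt|ntt] := eqVneq t t'.
      subst t'; move: e; move/(canRL (addrK _)); rewrite addrK => ew.
      by subst w'; rewrite (Af _ _ _ h1 h2).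
    exfalso; apply: nx; exists ((t - t')^-1 * (a2 - a1)).
    have -> : x = (t - t')^-1 *: (w' - w).
      have e2 : (t - t') *: x = w' - w.
        by rewrite scalerBl; apply/eqP; rewrite subr_eq addrAC -e addrC addKr.
      by rewrite -e2 scalerA mulVf ?scale1r // subr_eq0.
    apply: (AZ); rewrite [w' - w]addrC [a2 - a1]addrC; apply: (AD) => //.
    by have := AZ (-1) _ _ h1; rewrite scaleN1r mulN1r.
  - move=> y a [w [a1 [t [h1 [-> ->]]]]].
    have [t0|t0|t0] := ltgtP t 0.
    + have tp : 0 < - t by rewrite oppr_gt0.
      have := cge _ _ (AZ (- t)^-1 _ _ h1).
      have -> : (- t)^-1 *: w - x = (- t)^-1 *: (w + t *: x).
        rewrite scalerDr scalerA invrN mulNr mulVf ?lt_eqF // scaleN1r.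
        by rewrite scaleNr.
      rewrite normrZ gtr0_norm ?invr_gt0 //.
      move=> h; have := ler_wpM2l (ltW tp) h.
      rewrite mulrBr !mulrA mulfV ?gt_eqF // !mul1r; lra.
    + have tp : 0 < t by [].
      have := cle _ _ (AZ t^-1 _ _ h1).
      have -> : t^-1 *: w + x = t^-1 *: (w + t *: x).
        by rewrite scalerDr scalerA mulVf ?gt_eqF // scale1r.
      rewrite normrZ gtr0_norm ?invr_gt0 //.
      move=> h; have := ler_wpM2l (ltW tp) h.
      rewrite mulrBr !mulrA mulfV ?gt_eqF // !mul1r; lra.
    + by rewrite t0 scale0r mul0r !addr0; apply: Ad.
  - move=> k y a z b [w [a1 [t [h1 [-> ->]]]]] [w' [a2 [t' [h2 [-> ->]]]]].
    exists (k *: w + w'), (k * a1 + a2), (k * t + t'); split; first exact: Al.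
    congr (_, _).
      by rewrite scalerDr scalerA scalerDl -!addrA; congr (_ + _); rewrite addrCA.
    by rewrite mulrDr mulrA mulrDl -!addrA; congr (_ + _); rewrite addrCA.
  - by right; apply: AB.
move/choice: tot => [g Hg].
have gA y a : A (y, a) -> g y = a by move=> h; apply: (Af y) => //.
have glin : forall (a : R) u v, g (a *: u + v) = a * g u + g v.
  by move=> a u v; apply: gA; apply: Al.
have gN y : g (- y) = - g y.
  have := glin (-1) y 0; rewrite scaleN1r addr0 mulN1r (gA _ _ A00) addr0 //.
exists g; split => //; split; last exact: gA.
move=> y; rewrite ler_norml; apply/andP; split; last exact: Ad.
by rewrite lerNl -gN -(normrN y); apply: Ad.
Qed.
End HahnBanach.

Lemma allW_T (R : realType) (V : lmodType R) (s : seq V) : allW setT s.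
Proof. by elim: s. Qed.

Lemma fd_to_oct (R : realType) (X : normedModType R) :
  c0_fd_condition X -> c0_octahedral X.
Proof.
move=> H xs hxs eps e0; have [Y [cY HY]] := H xs eps e0.
exists Y; split => // y Yy i.
have xi0 : xs`_i != 0.
  by apply/eqP => h; move: (hxs i); rewrite h normr0 => /eqP; rewrite eq_sym oner_eq0.
by have := HY y xs`_i Yy (mem_span i) (or_introl xi0); rewrite hxs.
Qed.

Lemma oct_to_fd (R : realType) (X : normedModType R) :
  c0_octahedral X -> c0_fd_condition X.
Proof.
move=> H zs eps e0.
pose d := Num.min eps 1 / 4.
have d0 : 0 < d by rewrite /d divr_gt0 // lt_min e0 ltr01.
have d1 : d <= 1 / 4 by rewrite /d ler_pM2r // ge_min lexx orbT.
have de : 2 * d <= eps.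
  have : Num.min eps 1 <= eps by rewrite ge_min lexx.
  rewrite /d; lra.
have WD : forall x y : X, setT x -> setT y -> setT (x + y) by [].
have WZ : forall (a : R) (x : X), setT x -> setT (a *: x) by [].
have NZ : forall (a : R) (x : X), setT x -> `|a *: x| = `|a| * `|x|.
  by move=> a x _; rewrite normrZ.
have ND : forall x y : X, setT x -> setT y -> `|x + y| <= `|x| + `|y|.
  by move=> x y _ _; apply: ler_normD.
have [us [usp usnet]] := net (I : setT (0 : X)) WD WZ NZ ND (allW_T zs) d0.
have hus : forall i : 'I_(size us), `|us`_i| = 1.
  by move=> i; apply: (usp _ (mem_nth 0 (ltn_ord i))).2.
have [Y [[J [HJ ->]] HY]] := H us hus d d0.
exists (J @` (@c0seq R)); split; first by exists J.
move=> y z Yy /span_rspan sz nz.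
have [z0|zn0] := eqVneq z 0.
  subst z; case: nz => [|yn0]; first by rewrite eqxx.
  rewrite normr0 !add0r; have : 0 < `|y| by rewrite normr_gt0.
  move=> h; rewrite -subr_gt0 -{1}(mul1r `|y|) -mulrBl; apply: mulr_gt0 => //; lra.
set t := `|z|.
have t0 : 0 < t by rewrite normr_gt0.
have sz' : rspan zs (t^-1 *: z) by apply: rspanZ.
have nz' : `|t^-1 *: z| = 1 by rewrite normrZ gtr0_norm ?invr_gt0 // mulVf ?gt_eqF.
have [u uus zu] := usnet _ sz' nz'.
have ui := nth_index 0 uus.
have hi : (index u us < size us)%N by rewrite index_mem.
have := HY (t^-1 *: y) (imZ HJ _ Yy) (Ordinal hi); rewrite /= ui.
set y' := t^-1 *: y => hu.
have h1 : `|u + y'| <= `|t^-1 *: z + y'| + `|t^-1 *: z - u|.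
  have -> : u + y' = (t^-1 *: z + y') - (t^-1 *: z - u).
    by rewrite opprB [RHS]addrC addrA subrK.
  by apply: le_trans (ler_normB _ _) _.
have ny : `|y'| = t^-1 * `|y| by rewrite normrZ gtr0_norm ?invr_gt0.
have ny0 : 0 <= `|y'| by [].
have h2 : (1 - 2 * d) * (1 + `|y'|) < `|t^-1 *: z + y'|.
  have : d * `|y'| >= 0 by apply: mulr_ge0 => //; exact: ltW.
  move: hu h1 zu; rewrite -/y'; nra.
have -> : z + y = t *: (t^-1 *: z + y').
  by rewrite scalerDr !scalerA mulfV ?gt_eqF // !scale1r.
rewrite normrZ gtr0_norm //.
have : (1 - eps) * (t + `|y|) <= (1 - 2 * d) * (t + `|y|).
  by apply: ler_wpM2r; [apply: addr_ge0; [exact: ltW|] | lra].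
have -> : t + `|y| = t * (1 + `|y'|).
  by rewrite ny mulrDr mulr1 mulrA mulfV ?gt_eqF // mul1r.
move=> h; apply: le_lt_trans h _.
by rewrite mulrCA ltr_pM2l.
Qed.

Section Opnorm.
Variables (R : realType) (Y X : normedModType R).

Lemma BL0 (T : Y -> X) : bounded_linear T -> T 0 = 0.
Proof.
move=> [lin _]; have := lin 1 0 0; rewrite !scale1r addr0 => h.
by apply: (addrI (T 0)); rewrite addr0 -h.
Qed.

Lemma BLZ (T : Y -> X) (a : R) y : bounded_linear T -> T (a *: y) = a *: T y.
Proof. by move=> hT; have := hT.1 a y 0; rewrite addr0 BL0 // addr0. Qed.

Lemma BLD (T : Y -> X) y y' : bounded_linear T -> T (y + y') = T y + T y'.
Proof. by move=> hT; have := hT.1 1 y y'; rewrite !scale1r. Qed.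

Lemma op_has_sup (T : Y -> X) : bounded_linear T ->
  has_sup [set `|T y| | y in [set y : Y | `|y| <= 1]].
Proof.
move=> hT; have [_ [M HM]] := hT; split.
  by exists `|T 0|, 0 => //=; rewrite normr0.
exists `|M| => _ [y /= y1 <-]; apply: le_trans (HM y) _.
apply: le_trans (ler_norm _) _; rewrite normrM normr_id.
by rewrite -{2}(mulr1 `|M|); apply: ler_wpM2l.
Qed.

Lemma op_ge (T : Y -> X) y : bounded_linear T -> `|y| <= 1 -> `|T y| <= opnorm T.
Proof. by move=> hT y1; apply: sup_upper_bound; [exact: op_has_sup | exists y]. Qed.

Lemma op_le (T : Y -> X) c : bounded_linear T ->
  (forall y, `|y| <= 1 -> `|T y| <= c) -> opnorm T <= c.
Proof.
move=> hT hc; apply: ge_sup; first by exists `|T 0|, 0 => //=; rewrite normr0.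
by move=> _ [y /= y1 <-]; apply: hc.
Qed.

Lemma op_ge0 (T : Y -> X) : bounded_linear T -> 0 <= opnorm T.
Proof. by move=> hT; apply: le_trans (op_ge (y:=0) hT _) => //; rewrite normr0 ler01. Qed.

Lemma op_bound (T : Y -> X) y : bounded_linear T -> `|T y| <= opnorm T * `|y|.
Proof.
move=> hT; have [->|y0] := eqVneq y 0; first by rewrite BL0 // !normr0 mulr0.
have ny : 0 < `|y| by rewrite normr_gt0.
have := op_ge (y:=`|y|^-1 *: y) hT.
rewrite normrZ BLZ // normrZ gtr0_norm ?invr_gt0 // mulVf ?gt_eqF // => /(_ (lexx _)).
move=> h; have := ler_wpM2r (ltW ny) h; by rewrite mulrAC mulVf ?gt_eqF // mul1r.
Qed.

Lemma op_adh (T : Y -> X) d : bounded_linear T -> 0 < d ->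
  exists y, `|y| <= 1 /\ opnorm T - d < `|T y|.
Proof.
move=> hT d0; have [_ [y /= y1 <-] h] := sup_adherent d0 (op_has_sup hT).
by exists y.
Qed.

Lemma BL_0 : bounded_linear (0 : Y -> X).
Proof.
split; first by move=> a u v /=; rewrite scaler0 addr0.
by exists 0 => y /=; rewrite normr0 mul0r.
Qed.

Lemma BL_D (T T' : Y -> X) : bounded_linear T -> bounded_linear T' ->
  bounded_linear (T + T').
Proof.
move=> hT hT'; split.
  move=> a u v.
  change (T (a *: u + v) + T' (a *: u + v) = a *: (T u + T' u) + (T v + T' v)).
  rewrite hT.1 hT'.1 scalerDr.
  by rewrite -!addrA; congr (_ + _); rewrite addrCA.
exists (opnorm T + opnorm T') => y.
change (`|T y + T' y| <= (opnorm T + opnorm T') * `|y|).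
apply: le_trans (ler_normD _ _) _.
by rewrite mulrDl; apply: lerD; apply: op_bound.
Qed.

Lemma BL_Z (a : R) (T : Y -> X) : bounded_linear T -> bounded_linear (a *: T).
Proof.
move=> hT; split.
  move=> b u v.
  change (a *: T (b *: u + v) = b *: (a *: T u) + a *: T v).
  by rewrite hT.1 scalerDr !scalerA mulrC.
exists (`|a| * opnorm T) => y.
change (`|a *: T y| <= `|a| * opnorm T * `|y|); rewrite normrZ -mulrA.
by apply: ler_wpM2l => //; apply: op_bound.
Qed.

Lemma op_Z (a : R) (T : Y -> X) : bounded_linear T -> opnorm (a *: T) = `|a| * opnorm T.
Proof.
move=> hT; apply/eqP; rewrite eq_le; apply/andP; split.
  apply: op_le; first exact: BL_Z.
  move=> y y1; change (`|a *: T y| <= `|a| * opnorm T).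
  rewrite normrZ; apply: ler_wpM2l => //; exact: op_ge.
have [->|a0] := eqVneq a 0; first by rewrite normr0 mul0r; apply: op_ge0; apply: BL_Z.
rewrite mulrC -ler_pdivlMr ?normr_gt0 //.
apply: op_le => // y y1; rewrite ler_pdivlMr ?normr_gt0 // mulrC -normrZ.
exact: (op_ge (y:=y) (BL_Z a hT) y1).
Qed.

Lemma op_D (T T' : Y -> X) : bounded_linear T -> bounded_linear T' ->
  opnorm (T + T') <= opnorm T + opnorm T'.
Proof.
move=> hT hT'; apply: op_le; first exact: BL_D.
move=> y y1; change (`|T y + T' y| <= opnorm T + opnorm T').
apply: le_trans (ler_normD _ _) _.
by apply: lerD; apply: op_ge.
Qed.
End Opnorm.

Lemma allW_nth (R : realType) (V : lmodType R) (W : set V) (s : seq V) :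
  (forall i : 'I_(size s), W s`_i) -> allW W s.
Proof.
elim: s => [//|x s IH] /= h; split; first exact: (h ord0).
by apply: IH => i; have := h (lift ord0 i).
Qed.

Lemma mem_span_in (R : realType) (V : lmodType R) (s : seq V) x :
  x \in s -> span_of s x.
Proof.
move=> xs; have hi : (index x s < size s)%N by rewrite index_mem.
rewrite -(nth_index 0 xs); exact: (mem_span (Ordinal hi)).
Qed.

Lemma oct_to_univ (R : realType) (X : completeNormedModType R) :
  c0_octahedral X -> universally_octahedral X.
Proof.
move=> Hoct; have Hfd := oct_to_fd Hoct.
move=> Y [yn yn0] s hs eps e0.
pose d := Num.min eps 1 / 4.
have d0 : 0 < d by rewrite /d divr_gt0 // lt_min e0 ltr01.
have d1 : d <= 1 / 4 by rewrite /d ler_pM2r // ge_min lexx orbT.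
have de : 4 * d <= eps.
  have : Num.min eps 1 <= eps by rewrite ge_min lexx.
  rewrite /d; lra.
pose W := @bounded_linear R Y X.
pose N := @opnorm R Y X.
have W0 : W 0 := @BL_0 R Y X.
have WD : forall x y, W x -> W y -> W (x + y) := @BL_D R Y X.
have WZ : forall (a : R) x, W x -> W (a *: x) := @BL_Z R Y X.
have NZ : forall (a : R) x, W x -> N (a *: x) = `|a| * N x := @op_Z R Y X.
have ND : forall x y, W x -> W y -> N (x + y) <= N x + N y := @op_D R Y X.
have Ws : allW W s by apply: allW_nth.
have [us [usp usnet]] := net W0 WD WZ NZ ND Ws d0.
have : forall u : Y -> X, exists y : Y,
    W u /\ N u = 1 -> `|y| <= 1 /\ 1 - d < `|u y|.
  move=> u; have [[Wu Nu]|nu] := pselect (W u /\ N u = 1).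
    have [y [y1 hy]] := op_adh Wu d0; exists y => _; split => //.
    by move: hy; rewrite -/N Nu.
  by exists 0.
move/choice => [yf Hyf].
have : forall y : Y, exists g : Y -> R,
    (forall (a : R) u v, g (a *: u + v) = a * g u + g v) /\
    (forall y', `|g y'| <= `|y'|) /\ g y = `|y|.
  by move=> y; apply: hahn_banach.
move/choice => [G HG].
pose ystar := `|yn|^-1 *: yn.
have nys : `|ystar| = 1.
  by rewrite normrZ gtr0_norm ?invr_gt0 ?normr_gt0 // mulVf // normr_eq0.
pose ys := ystar :: [seq yf u | u <- us].
pose xs := [seq u (yf u) | u <- us].
have [Y0 [[J [HJ ->]] HY0]] := Hfd xs d d0.
have [Jlin Jiso] := HJ.
pose m := size ys.
pose S := fun y : Y => J (fsupp m (fun n => G ys`_n y)).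
have Slin : forall (a : R) u v, S (a *: u + v) = a *: S u + S v.
  move=> a u v; rewrite /S -Jlin; try exact: c0seq_fsupp.
  congr (J _).
  apply: funext => n; rewrite /fsupp; case: ifP => _; last by rewrite mulr0 addr0.
  by rewrite (HG _).1.
have Sle : forall y, `|S y| <= `|y|.
  move=> y; rewrite Jiso; last exact: c0seq_fsupp. apply: c0norm_fsupp_le => // n _.
  exact: (HG _).2.1.
have Sge : forall y n, (n < m)%N -> `|G ys`_n y| <= `|S y|.
  move=> y n nm; rewrite Jiso; last exact: c0seq_fsupp.
  apply: (c0norm_fsupp_ge (c := `|y|)) => // k _; exact: (HG _).2.1.
have WS : W S.
  split; first exact: Slin.
  by exists 1 => y; rewrite mul1r.
have NS : N S = 1.
  apply/eqP; rewrite eq_le; apply/andP; split.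
    by apply: op_le => // y y1; apply: le_trans (Sle y) y1.
  have := op_ge (y:=ystar) WS; rewrite nys => /(_ (lexx _)).
  apply: le_trans; have := Sge ystar 0%N isT.
  by rewrite /= (HG _).2.2 nys normr1.
exists S; split => //; split => //.
move=> T lam /span_rspan sT.
change ((1 - eps) * (N T + `|lam|) <= N (T + lam *: S)).
have WT : W T := rspan_W W0 WD WZ Ws sT.
have t0 : 0 <= N T := op_ge0 WT.
have WTS : W (T + lam *: S) by apply: WD => //; apply: WZ.
have [tz|tp] := eqVneq (N T) 0.
  rewrite tz add0r.
  have : N (lam *: S) <= N (T + lam *: S) + N ((-1) *: T).
    have e : lam *: S = (T + lam *: S) + (-1) *: T.
      by rewrite scaleN1r addrAC subrr add0r.
    by rewrite {1}e; apply: ND => //; apply: WZ.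
  rewrite NZ // NS mulr1 NZ // tz mulr0 addr0.
  have : 0 <= `|lam| by [].
  nra.
have tpos : 0 < N T by rewrite lt_def tp t0.
set t := N T in t0 tp tpos *.
pose T' := t^-1 *: T.
have sT' : rspan s T' by apply: rspanZ.
have WT' : W T' by apply: WZ.
have NT' : N T' = 1 by rewrite NZ // gtr0_norm ?invr_gt0 // mulVf.
have [u uus Tu] := usnet _ sT' NT'.
have [su Nu] := usp _ uus.
have Wu : W u := rspan_W W0 WD WZ Ws su.
set y1 := yf u.
have [y11 uy1] := Hyf u (conj Wu Nu).
rewrite -/y1 in y11 uy1.
set z := u y1.
have zxs : z \in xs by apply: (map_f (fun u => u (yf u))).
set yv := (lam / t) *: S y1.
have Yyv : (J @` (@c0seq R)) yv.
  by apply: (imZ HJ); exists (fsupp m (fun n => G ys`_n y1)) => //; apply: c0seq_fsupp.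
have nz : 0 < `|z| by apply: le_lt_trans _ uy1; lra.
have z0 : z != 0 by rewrite -normr_gt0.
have hfd := HY0 yv z Yyv (mem_span_in zxs) (or_introl z0).
have Sy1 : `|y1| <= `|S y1|.
  have hi : (index u us < size us)%N by rewrite index_mem.
  have := Sge y1 (index u us).+1; rewrite /m /= ltnS size_map => /(_ hi).
  by rewrite (nth_map 0) // nth_index // (HG _).2.2 normr_id.
have uy1le : `|z| <= `|y1|.
  by apply: le_trans (op_bound y1 Wu) _; rewrite -/N Nu mul1r.
have WT'u : W (T' - u) by rewrite -scaleN1r; apply: WD => //; apply: WZ.
have dz : `|(T' - u) y1| <= d.
  apply: le_trans (op_bound y1 WT'u) _.
  apply: le_trans (_ : N (T' - u) * 1 <= _); first by apply: ler_wpM2l => //; apply: op_ge0.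
  by rewrite mulr1; apply: ltW.
have WT'S : W (T' + (lam / t) *: S) by apply: WD => //; apply: WZ.
have key : `|T' y1 + yv| <= N (T' + (lam / t) *: S).
  exact: (op_ge (y:=y1) WT'S y11).
have eqT : T' y1 + yv = (z + yv) + (T' - u) y1.
  change (T' y1 + yv = (z + yv) + (T' y1 - u y1)).
  by rewrite [RHS]addrC addrA subrK.
have tri : `|z + yv| - d <= `|T' y1 + yv|.
  rewrite eqT; have := ler_normB (z + yv + (T' - u) y1) ((T' - u) y1).
  by rewrite addrK; lra.
set K := `|lam| / t.
have K0 : 0 <= K by apply: divr_ge0.
have nyv : `|yv| = K * `|S y1|.
  by rewrite /yv normrZ normrM [`|t^-1|]gtr0_norm ?invr_gt0.
have hq : 1 - d < `|S y1| by apply: lt_le_trans uy1 (le_trans uy1le Sy1).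
have hb : K * (1 - d) <= K * `|S y1| by apply: ler_wpM2l => //; exact: ltW.
have hab : (1 - d) * (1 - d) + (1 - d) * (K * (1 - d)) <= (1 - d) * (`|z| + `|yv|).
  rewrite -mulrDr; apply: ler_wpM2l; first lra.
  rewrite nyv; apply: lerD => //; exact: ltW.
have fin : (1 - eps) * (1 + K) <= (1 - d) * (1 - d) + (1 - d) * (K * (1 - d)) - d.
  have : 0 <= K * d by apply: mulr_ge0 => //; exact: ltW.
  have : 0 <= K * d * d by apply: mulr_ge0; [apply: mulr_ge0 => //; exact: ltW | exact: ltW].
  have : 0 <= K * (eps - 4 * d) by apply: mulr_ge0 => //; lra.
  nra.
have main : (1 - eps) * (1 + K) <= N (T' + (lam / t) *: S).
  by apply: le_trans key; lra.
have -> : T + lam *: S = t *: (T' + (lam / t) *: S).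
  rewrite scalerDr /T' !scalerA mulfV ?gt_eqF // scale1r; congr (_ + _).
  by rewrite mulrCA mulfV ?gt_eqF // mulr1.
rewrite NZ // [`|t|]gtr0_norm //.
have -> : t + `|lam| = t * (1 + K) by rewrite mulrDr mulr1 /K mulrCA mulfV ?gt_eqF // mulr1.
by rewrite mulrCA; apply: ler_wpM2l => //; exact: ltW.
Qed.

Unset Implicit Arguments.

Theorem mainTheorem9 (R : realType) (X : completeNormedModType R) :
  (c0_octahedral X -> universally_octahedral X) /\
  (c0_octahedral X <-> c0_fd_condition X).
Proof.
split; first exact: oct_to_univ.
by split; [exact: oct_to_fd | exact: fd_to_oct].
Qed.
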